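(* Let $$f(t)=\frac{2431}{80}t^9-\frac{1287}{20}t^7+\frac{18333}{400}t^5+\frac{343}{40}t^4-\frac{83}{10}t^3-\frac{213}{100}t^2+\frac{t}{10}-\frac{1}{200}.$$ For any finite set $X=\{x_1,\dots,x_n\}\subset\mathbf{S}^2$, with $\phi_{i,j}$ the angular distance between $x_i$ and $x_j$, $$S(X):=\sum_{i=1}^n\sum_{j=1}^n f(\cos\phi_{i,j})\ \ge\ n^2.$$
   Context: $\mathbf{S}^2$ is the unit sphere in $\mathbb{R}^3$; the angular (spherical) distance between unit vectors $x,y$ is $\arccos\langle x,y\rangle$. *)

(* Defs.v *)
From Stdlib Require Import Reals List.
Open Scope R_scope.

Definition vec3 : Type := (R * R * R)%type.

Definition inner (x y : vec3) : R :=
  let '(x1, x2, x3) := x in let '(y1, y2, y3) := y in x1*y1 + x2*y2 + x3*y3.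

Definition on_S2 (x : vec3) : Prop := inner x x = 1.

Definition angdist (x y : vec3) : R := acos (inner x y).

Definition f (t : R) : R :=
  2431/80 * t^9 - 1287/20 * t^7 + 18333/400 * t^5 + 343/40 * t^4
  - 83/10 * t^3 - 213/100 * t^2 + t/10 - 1/200.

Definition S (X : list vec3) : R :=
  fold_right Rplus 0
    (map (fun xi => fold_right Rplus 0
            (map (fun xj => f (cos (angdist xi xj))) X)) X).

(* Main.v *)
Require Import Defs.
From Stdlib Require Import Reals List Lra Psatz.
Open Scope R_scope.

Definition kern (L : list (R * (vec3 -> R))) (x y : vec3) : R :=
  fold_right (fun p acc => fst p * snd p x * snd p y + acc) 0 L.
Definition scale (c : R) (L : list (R * (vec3 -> R))) : list (R * (vec3 -> R)) :=
  map (fun p => (c * fst p, snd p)) L.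
Definition Q1 (t n : R) : R := t^1.
Definition g1_0 (v : vec3) : R := let '(a,b,c) := v in a.
Definition g1_1 (v : vec3) : R := let '(a,b,c) := v in b.
Definition g1_2 (v : vec3) : R := let '(a,b,c) := v in c.
Definition L1 : list (R * (vec3 -> R)) := (1, g1_0) :: (1, g1_1) :: (1, g1_2) :: nil.
Lemma L1_pos : Forall (fun p => 0 <= fst p) L1.
Proof. unfold L1; repeat constructor; simpl; lra. Qed.
Lemma L1_id (a b c d e f' : R) :
  kern L1 (a,b,c) (d,e,f') = 1 * Q1 (a*d+b*e+c*f') ((a*a+b*b+c*c)*(d*d+e*e+f'*f')).
Proof. unfold kern, L1, Q1; simpl; unfold g1_0 ,g1_1 ,g1_2; ring. Qed.
Definition Q2 (t n : R) : R := - t^0*n^1 + 3*t^2.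
Definition g2_0 (v : vec3) : R := let '(a,b,c) := v in 2*a^2 - b^2 - c^2.
Definition g2_1 (v : vec3) : R := let '(a,b,c) := v in a*b.
Definition g2_2 (v : vec3) : R := let '(a,b,c) := v in a*c.
Definition g2_3 (v : vec3) : R := let '(a,b,c) := v in b^2 - c^2.
Definition g2_4 (v : vec3) : R := let '(a,b,c) := v in b*c.
Definition L2 : list (R * (vec3 -> R)) := (1, g2_0) :: (12, g2_1) :: (12, g2_2) :: (3, g2_3) :: (12, g2_4) :: nil.
Lemma L2_pos : Forall (fun p => 0 <= fst p) L2.
Proof. unfold L2; repeat constructor; simpl; lra. Qed.
Lemma L2_id (a b c d e f' : R) :
  kern L2 (a,b,c) (d,e,f') = 2 * Q2 (a*d+b*e+c*f') ((a*a+b*b+c*c)*(d*d+e*e+f'*f')).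
Proof. unfold kern, L2, Q2; simpl; unfold g2_0 ,g2_1 ,g2_2 ,g2_3 ,g2_4; ring. Qed.
Definition Q3 (t n : R) : R := - 3*t^1*n^1 + 5*t^3.
Definition g3_0 (v : vec3) : R := let '(a,b,c) := v in 2*a^3 - 3*a*b^2 - 3*a*c^2.
Definition g3_1 (v : vec3) : R := let '(a,b,c) := v in 4*a^2*b - b^3 - b*c^2.
Definition g3_2 (v : vec3) : R := let '(a,b,c) := v in 4*a^2*c - b^2*c - c^3.
Definition g3_3 (v : vec3) : R := let '(a,b,c) := v in a*b^2 - a*c^2.
Definition g3_4 (v : vec3) : R := let '(a,b,c) := v in a*b*c.
Definition g3_5 (v : vec3) : R := let '(a,b,c) := v in b^3 - 3*b*c^2.
Definition g3_6 (v : vec3) : R := let '(a,b,c) := v in 3*b^2*c - c^3.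
Definition L3 : list (R * (vec3 -> R)) := (2, g3_0) :: (3, g3_1) :: (3, g3_2) :: (30, g3_3) :: (120, g3_4) :: (5, g3_5) :: (5, g3_6) :: nil.
Lemma L3_pos : Forall (fun p => 0 <= fst p) L3.
Proof. unfold L3; repeat constructor; simpl; lra. Qed.
Lemma L3_id (a b c d e f' : R) :
  kern L3 (a,b,c) (d,e,f') = 4 * Q3 (a*d+b*e+c*f') ((a*a+b*b+c*c)*(d*d+e*e+f'*f')).
Proof. unfold kern, L3, Q3; simpl; unfold g3_0 ,g3_1 ,g3_2 ,g3_3 ,g3_4 ,g3_5 ,g3_6; ring. Qed.
Definition Q4 (t n : R) : R := 3*t^0*n^2 - 30*t^2*n^1 + 35*t^4.
Definition g4_0 (v : vec3) : R := let '(a,b,c) := v in 8*a^4 - 24*a^2*b^2 - 24*a^2*c^2 + 3*b^4 + 6*b^2*c^2 + 3*c^4.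
Definition g4_1 (v : vec3) : R := let '(a,b,c) := v in 4*a^3*b - 3*a*b^3 - 3*a*b*c^2.
Definition g4_2 (v : vec3) : R := let '(a,b,c) := v in 4*a^3*c - 3*a*b^2*c - 3*a*c^3.
Definition g4_3 (v : vec3) : R := let '(a,b,c) := v in 6*a^2*b^2 - 6*a^2*c^2 - b^4 + c^4.
Definition g4_4 (v : vec3) : R := let '(a,b,c) := v in 6*a^2*b*c - b^3*c - b*c^3.
Definition g4_5 (v : vec3) : R := let '(a,b,c) := v in a*b^3 - 3*a*b*c^2.
Definition g4_6 (v : vec3) : R := let '(a,b,c) := v in 3*a*b^2*c - a*c^3.
Definition g4_7 (v : vec3) : R := let '(a,b,c) := v in b^4 - 6*b^2*c^2 + c^4.
Definition g4_8 (v : vec3) : R := let '(a,b,c) := v in b^3*c - b*c^3.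
Definition L4 : list (R * (vec3 -> R)) := (1, g4_0) :: (40, g4_1) :: (40, g4_2) :: (20, g4_3) :: (80, g4_4) :: (280, g4_5) :: (280, g4_6) :: (35, g4_7) :: (560, g4_8) :: nil.
Lemma L4_pos : Forall (fun p => 0 <= fst p) L4.
Proof. unfold L4; repeat constructor; simpl; lra. Qed.
Lemma L4_id (a b c d e f' : R) :
  kern L4 (a,b,c) (d,e,f') = 8 * Q4 (a*d+b*e+c*f') ((a*a+b*b+c*c)*(d*d+e*e+f'*f')).
Proof. unfold kern, L4, Q4; simpl; unfold g4_0 ,g4_1 ,g4_2 ,g4_3 ,g4_4 ,g4_5 ,g4_6 ,g4_7 ,g4_8; ring. Qed.
Definition Q5 (t n : R) : R := 15*t^1*n^2 - 70*t^3*n^1 + 63*t^5.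
Definition g5_0 (v : vec3) : R := let '(a,b,c) := v in 8*a^5 - 40*a^3*b^2 - 40*a^3*c^2 + 15*a*b^4 + 30*a*b^2*c^2 + 15*a*c^4.
Definition g5_1 (v : vec3) : R := let '(a,b,c) := v in 8*a^4*b - 12*a^2*b^3 - 12*a^2*b*c^2 + b^5 + 2*b^3*c^2 + b*c^4.
Definition g5_2 (v : vec3) : R := let '(a,b,c) := v in 8*a^4*c - 12*a^2*b^2*c - 12*a^2*c^3 + b^4*c + 2*b^2*c^3 + c^5.
Definition g5_3 (v : vec3) : R := let '(a,b,c) := v in 2*a^3*b^2 - 2*a^3*c^2 - a*b^4 + a*c^4.
Definition g5_4 (v : vec3) : R := let '(a,b,c) := v in 2*a^3*b*c - a*b^3*c - a*b*c^3.
Definition g5_5 (v : vec3) : R := let '(a,b,c) := v in 8*a^2*b^3 - 24*a^2*b*c^2 - b^5 + 2*b^3*c^2 + 3*b*c^4.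
Definition g5_6 (v : vec3) : R := let '(a,b,c) := v in 24*a^2*b^2*c - 8*a^2*c^3 - 3*b^4*c - 2*b^2*c^3 + c^5.
Definition g5_7 (v : vec3) : R := let '(a,b,c) := v in a*b^4 - 6*a*b^2*c^2 + a*c^4.
Definition g5_8 (v : vec3) : R := let '(a,b,c) := v in a*b^3*c - a*b*c^3.
Definition g5_9 (v : vec3) : R := let '(a,b,c) := v in b^5 - 10*b^3*c^2 + 5*b*c^4.
Definition g5_10 (v : vec3) : R := let '(a,b,c) := v in 5*b^4*c - 10*b^2*c^3 + c^5.
Definition L5 : list (R * (vec3 -> R)) := (2, g5_0) :: (30, g5_1) :: (30, g5_2) :: (840, g5_3) :: (3360, g5_4) :: (35, g5_5) :: (35, g5_6) :: (630, g5_7) :: (10080, g5_8) :: (63, g5_9) :: (63, g5_10) :: nil.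
Lemma L5_pos : Forall (fun p => 0 <= fst p) L5.
Proof. unfold L5; repeat constructor; simpl; lra. Qed.
Lemma L5_id (a b c d e f' : R) :
  kern L5 (a,b,c) (d,e,f') = 16 * Q5 (a*d+b*e+c*f') ((a*a+b*b+c*c)*(d*d+e*e+f'*f')).
Proof. unfold kern, L5, Q5; simpl; unfold g5_0 ,g5_1 ,g5_2 ,g5_3 ,g5_4 ,g5_5 ,g5_6 ,g5_7 ,g5_8 ,g5_9 ,g5_10; ring. Qed.
Definition Q9 (t n : R) : R := 315*t^1*n^4 - 4620*t^3*n^3 + 18018*t^5*n^2 - 25740*t^7*n^1 + 12155*t^9.
Definition g9_0 (v : vec3) : R := let '(a,b,c) := v in 128*a^9 - 2304*a^7*b^2 - 2304*a^7*c^2 + 6048*a^5*b^4 + 12096*a^5*b^2*c^2 + 6048*a^5*c^4 - 3360*a^3*b^6 - 10080*a^3*b^4*c^2 - 10080*a^3*b^2*c^4 - 3360*a^3*c^6 + 315*a*b^8 + 1260*a*b^6*c^2 + 1890*a*b^4*c^4 + 1260*a*b^2*c^6 + 315*a*c^8.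
Definition g9_1 (v : vec3) : R := let '(a,b,c) := v in 128*a^8*b - 896*a^6*b^3 - 896*a^6*b*c^2 + 1120*a^4*b^5 + 2240*a^4*b^3*c^2 + 1120*a^4*b*c^4 - 280*a^2*b^7 - 840*a^2*b^5*c^2 - 840*a^2*b^3*c^4 - 280*a^2*b*c^6 + 7*b^9 + 28*b^7*c^2 + 42*b^5*c^4 + 28*b^3*c^6 + 7*b*c^8.
Definition g9_2 (v : vec3) : R := let '(a,b,c) := v in 128*a^8*c - 896*a^6*b^2*c - 896*a^6*c^3 + 1120*a^4*b^4*c + 2240*a^4*b^2*c^3 + 1120*a^4*c^5 - 280*a^2*b^6*c - 840*a^2*b^4*c^3 - 840*a^2*b^2*c^5 - 280*a^2*c^7 + 7*b^8*c + 28*b^6*c^3 + 42*b^4*c^5 + 28*b^2*c^7 + 7*c^9.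
Definition g9_3 (v : vec3) : R := let '(a,b,c) := v in 32*a^7*b^2 - 32*a^7*c^2 - 112*a^5*b^4 + 112*a^5*c^4 + 70*a^3*b^6 + 70*a^3*b^4*c^2 - 70*a^3*b^2*c^4 - 70*a^3*c^6 - 7*a*b^8 - 14*a*b^6*c^2 + 14*a*b^2*c^6 + 7*a*c^8.
Definition g9_4 (v : vec3) : R := let '(a,b,c) := v in 32*a^7*b*c - 112*a^5*b^3*c - 112*a^5*b*c^3 + 70*a^3*b^5*c + 140*a^3*b^3*c^3 + 70*a^3*b*c^5 - 7*a*b^7*c - 21*a*b^5*c^3 - 21*a*b^3*c^5 - 7*a*b*c^7.
Definition g9_5 (v : vec3) : R := let '(a,b,c) := v in 64*a^6*b^3 - 192*a^6*b*c^2 - 120*a^4*b^5 + 240*a^4*b^3*c^2 + 360*a^4*b*c^4 + 36*a^2*b^7 - 36*a^2*b^5*c^2 - 180*a^2*b^3*c^4 - 108*a^2*b*c^6 - b^9 + 6*b^5*c^4 + 8*b^3*c^6 + 3*b*c^8.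
Definition g9_6 (v : vec3) : R := let '(a,b,c) := v in 192*a^6*b^2*c - 64*a^6*c^3 - 360*a^4*b^4*c - 240*a^4*b^2*c^3 + 120*a^4*c^5 + 108*a^2*b^6*c + 180*a^2*b^4*c^3 + 36*a^2*b^2*c^5 - 36*a^2*c^7 - 3*b^8*c - 8*b^6*c^3 - 6*b^4*c^5 + c^9.
Definition g9_7 (v : vec3) : R := let '(a,b,c) := v in 8*a^5*b^4 - 48*a^5*b^2*c^2 + 8*a^5*c^4 - 8*a^3*b^6 + 40*a^3*b^4*c^2 + 40*a^3*b^2*c^4 - 8*a^3*c^6 + a*b^8 - 4*a*b^6*c^2 - 10*a*b^4*c^4 - 4*a*b^2*c^6 + a*c^8.
Definition g9_8 (v : vec3) : R := let '(a,b,c) := v in 8*a^5*b^3*c - 8*a^5*b*c^3 - 8*a^3*b^5*c + 8*a^3*b*c^5 + a*b^7*c + a*b^5*c^3 - a*b^3*c^5 - a*b*c^7.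
Definition g9_9 (v : vec3) : R := let '(a,b,c) := v in 56*a^4*b^5 - 560*a^4*b^3*c^2 + 280*a^4*b*c^4 - 28*a^2*b^7 + 252*a^2*b^5*c^2 + 140*a^2*b^3*c^4 - 140*a^2*b*c^6 + b^9 - 8*b^7*c^2 - 14*b^5*c^4 + 5*b*c^8.
Definition g9_10 (v : vec3) : R := let '(a,b,c) := v in 280*a^4*b^4*c - 560*a^4*b^2*c^3 + 56*a^4*c^5 - 140*a^2*b^6*c + 140*a^2*b^4*c^3 + 252*a^2*b^2*c^5 - 28*a^2*c^7 + 5*b^8*c - 14*b^4*c^5 - 8*b^2*c^7 + c^9.
Definition g9_11 (v : vec3) : R := let '(a,b,c) := v in 14*a^3*b^6 - 210*a^3*b^4*c^2 + 210*a^3*b^2*c^4 - 14*a^3*c^6 - 3*a*b^8 + 42*a*b^6*c^2 - 42*a*b^2*c^6 + 3*a*c^8.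
Definition g9_12 (v : vec3) : R := let '(a,b,c) := v in 42*a^3*b^5*c - 140*a^3*b^3*c^3 + 42*a^3*b*c^5 - 9*a*b^7*c + 21*a*b^5*c^3 + 21*a*b^3*c^5 - 9*a*b*c^7.
Definition g9_13 (v : vec3) : R := let '(a,b,c) := v in 16*a^2*b^7 - 336*a^2*b^5*c^2 + 560*a^2*b^3*c^4 - 112*a^2*b*c^6 - b^9 + 20*b^7*c^2 - 14*b^5*c^4 - 28*b^3*c^6 + 7*b*c^8.
Definition g9_14 (v : vec3) : R := let '(a,b,c) := v in 112*a^2*b^6*c - 560*a^2*b^4*c^3 + 336*a^2*b^2*c^5 - 16*a^2*c^7 - 7*b^8*c + 28*b^6*c^3 + 14*b^4*c^5 - 20*b^2*c^7 + c^9.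
Definition g9_15 (v : vec3) : R := let '(a,b,c) := v in a*b^8 - 28*a*b^6*c^2 + 70*a*b^4*c^4 - 28*a*b^2*c^6 + a*c^8.
Definition g9_16 (v : vec3) : R := let '(a,b,c) := v in a*b^7*c - 7*a*b^5*c^3 + 7*a*b^3*c^5 - a*b*c^7.
Definition g9_17 (v : vec3) : R := let '(a,b,c) := v in b^9 - 36*b^7*c^2 + 126*b^5*c^4 - 84*b^3*c^6 + 9*b*c^8.
Definition g9_18 (v : vec3) : R := let '(a,b,c) := v in 9*b^8*c - 84*b^6*c^3 + 126*b^4*c^5 - 36*b^2*c^7 + c^9.
Definition L9 : list (R * (vec3 -> R)) := (2, g9_0) :: (90, g9_1) :: (90, g9_2) :: (7920, g9_3) :: (31680, g9_4) :: (4620, g9_5) :: (4620, g9_6) :: (360360, g9_7) :: (5765760, g9_8) :: (5148, g9_9) :: (5148, g9_10) :: (34320, g9_11) :: (137280, g9_12) :: (6435, g9_13) :: (6435, g9_14) :: (218790, g9_15) :: (14002560, g9_16) :: (12155, g9_17) :: (12155, g9_18) :: nil.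
Lemma L9_pos : Forall (fun p => 0 <= fst p) L9.
Proof. unfold L9; repeat constructor; simpl; lra. Qed.
Lemma L9_id (a b c d e f' : R) :
  kern L9 (a,b,c) (d,e,f') = 256 * Q9 (a*d+b*e+c*f') ((a*a+b*b+c*c)*(d*d+e*e+f'*f')).
Proof. unfold kern, L9, Q9; simpl; unfold g9_0 ,g9_1 ,g9_2 ,g9_3 ,g9_4 ,g9_5 ,g9_6 ,g9_7 ,g9_8 ,g9_9 ,g9_10 ,g9_11 ,g9_12 ,g9_13 ,g9_14 ,g9_15 ,g9_16 ,g9_17 ,g9_18; ring. Qed.

Definition Ltot : list (R * (vec3 -> R)) :=
  scale (8/5) L1 ++ scale (87/100) L2 ++ scale (33/160) L3 ++
  scale (49/1600) L4 ++ scale (1/1280) L5 ++ scale (1/102400) L9.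

Lemma kern_app L1' L2' x y : kern (L1' ++ L2') x y = kern L1' x y + kern L2' x y.
Proof. induction L1' as [|p L IH]; simpl; [ring| rewrite IH; ring]. Qed.

Lemma kern_scale c L x y : kern (scale c L) x y = c * kern L x y.
Proof. induction L as [|p L IH]; simpl; [ring| unfold kern in *; simpl; rewrite IH; ring]. Qed.

Lemma Forall_scale c L : 0 <= c -> Forall (fun p => 0 <= fst p) L ->
  Forall (fun p => 0 <= fst p) (scale c L).
Proof.
  intros Hc H. induction H; simpl; constructor; auto. simpl. apply Rmult_le_pos; auto.
Qed.

Lemma Ltot_pos : Forall (fun p => 0 <= fst p) Ltot.
Proof.
  unfold Ltot.
  repeat (apply Forall_app; split); apply Forall_scale;
  first [lra | apply L1_pos | apply L2_pos | apply L3_pos | apply L4_pos | apply L5_pos | apply L9_pos].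
Qed.

Lemma key x y : on_S2 x -> on_S2 y -> Defs.f (inner x y) = 1 + kern Ltot x y.
Proof.
  destruct x as [[a b] c]; destruct y as [[d e] f'].
  unfold on_S2, inner. intros hx hy. simpl in hx, hy.
  unfold Ltot. rewrite !kern_app, !kern_scale.
  rewrite L1_id, L2_id, L3_id, L4_id, L5_id, L9_id.
  unfold inner. rewrite hx, hy.
  set (t := a*d+b*e+c*f').
  unfold Defs.f, Q1, Q2, Q3, Q4, Q5, Q9. field.
Qed.

Definition sum1 (h : vec3 -> R) (X : list vec3) : R := fold_right Rplus 0 (map h X).
Definition dsum (K : vec3 -> vec3 -> R) (X : list vec3) : R :=
  sum1 (fun xi => sum1 (fun xj => K xi xj) X) X.

Lemma sum1_ext h1 h2 X : (forall x, In x X -> h1 x = h2 x) -> sum1 h1 X = sum1 h2 X.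
Proof.
  induction X as [|a X IH]; intros H; simpl; auto.
  unfold sum1 in *; simpl. rewrite H by (left; auto). rewrite IH; auto.
  intros; apply H; right; auto.
Qed.

Lemma sum1_plus h1 h2 X : sum1 (fun x => h1 x + h2 x) X = sum1 h1 X + sum1 h2 X.
Proof. induction X; unfold sum1 in *; simpl; [ring| rewrite IHX; ring]. Qed.

Lemma sum1_scal c h X : sum1 (fun x => c * h x) X = c * sum1 h X.
Proof. induction X; unfold sum1 in *; simpl; [ring| rewrite IHX; ring]. Qed.

Lemma sum1_const c X : sum1 (fun _ => c) X = INR (length X) * c.
Proof.
  induction X; unfold sum1 in *; simpl; [ring|]. rewrite IHX.
  destruct (length X); simpl; ring.
Qed.

Lemma dsum_kern L X : Forall (fun p => 0 <= fst p) L -> 0 <= dsum (kern L) X.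
Proof.
  intros H. induction H as [|p L Hp HL IH].
  - unfold dsum. rewrite (sum1_ext _ (fun _ => 0)).
    + rewrite sum1_const; lra.
    + intros; rewrite (sum1_ext _ (fun _ => 0)); [rewrite sum1_const; ring| reflexivity].
  - assert (E : dsum (kern (p :: L)) X = fst p * (sum1 (snd p) X)^2 + dsum (kern L) X).
    { unfold dsum. simpl.
      rewrite (sum1_ext _ (fun xi => fst p * snd p xi * sum1 (snd p) X + sum1 (fun xj => kern L xi xj) X)).
      - rewrite sum1_plus. f_equal.
        rewrite (sum1_ext _ (fun xi => (fst p * sum1 (snd p) X) * snd p xi)).
        + rewrite sum1_scal. ring.
        + intros; ring.
      - intros xi _. rewrite sum1_plus.
        rewrite (sum1_scal (fst p * snd p xi) (snd p)). reflexivity. }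
    rewrite E. assert (0 <= (sum1 (snd p) X)^2) by (simpl; nra). nra.
Qed.

Lemma inner_bound x y : on_S2 x -> on_S2 y -> -1 <= inner x y <= 1.
Proof.
  destruct x as [[a b] c]; destruct y as [[d e] f'].
  unfold on_S2, inner; simpl. intros hx hy.
  assert (H : (a*d+b*e+c*f')^2 <= 1).
  { assert (L : (a*d+b*e+c*f')^2 + (a*e-b*d)^2 + (a*f'-c*d)^2 + (b*f'-c*e)^2
        = (a*a+b*b+c*c)*(d*d+e*e+f'*f')) by ring.
    rewrite hx, hy in L.
    assert (0 <= (a*e-b*d)^2) by apply pow2_ge_0.
    assert (0 <= (a*f'-c*d)^2) by apply pow2_ge_0.
    assert (0 <= (b*f'-c*e)^2) by apply pow2_ge_0. lra. }
  split; nra.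
Qed.

Theorem lemma2 (X : list vec3) :
  NoDup X -> (forall x, In x X -> on_S2 x) ->
  S X >= INR (length X) ^ 2.
Proof.
  intros _ HX.
  assert (E : S X = dsum (fun x y => 1 + kern Ltot x y) X).
  { unfold S, dsum. apply sum1_ext. intros xi Hi. apply sum1_ext. intros xj Hj.
    unfold angdist. rewrite cos_acos by (apply inner_bound; auto).
    apply key; auto. }
  rewrite E. unfold dsum.
  rewrite (sum1_ext _ (fun xi => sum1 (fun _ => 1) X + sum1 (fun xj => kern Ltot xi xj) X))
    by (intros; apply sum1_plus).
  rewrite sum1_plus, sum1_const, sum1_const.
  pose proof (dsum_kern Ltot X Ltot_pos). unfold dsum in H. replace (INR (length X) ^ 2) with (INR (length X) * INR (length X)) by ring. lra.
Qed.
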